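(* Let $F\colon[0,+\infty)\to[0,+\infty)$ be a continuous metric preserving function, let $X$ be an mm-space and $X^F:=(X,F\circ d_X,m_X)$. Then (1) $\sup_{\varepsilon>0}\alpha_{X^F}(2F(s)+\varepsilon)\le\alpha_X(s)$ for every $s>0$; (2) $\mathrm{OD}(X^F;-2\kappa)\le 4F(\mathrm{OD}(X;-\kappa))$ for every $\kappa>0$.
   Context: An mm-space is a triple $(X,d_X,m_X)$ with $(X,d_X)$ complete separable metric space and $m_X$ a Borel probability measure. $F\colon[0,+\infty)\to[0,+\infty)$ is metric preserving if $F\circ d$ is a metric for every metric $d$. For $A\subset X$, $r>0$: $U_r(A)=\{x: d_X(x,A)<r\}$. Concentration function: $\alpha_X(r):=\sup\{1-m_X(U_r(A)) : A\subset X \text{ Borel}, m_X(A)\ge 1/2\}$ (for $X^F$ neighborhoods are taken w.r.t. $F\circ d_X$). Partial diameter: for $\alpha\le 1$, $\mathrm{PD}(X;\alpha)$ is the infimum of $\operatorname{diam}A$ over Borel $A\subset X$ with $m_X(A)\ge\alpha$. Observable diameter: $\mathrm{OD}(X;-\kappa):=\sup_{f}\mathrm{PD}((\mathbb R,|\cdot|,f_*m_X);1-\kappa)$, the sup over all 1-Lipschitz $f\colon X\to\mathbb R$. *)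

(* Defs.v *)
From HB Require Import structures.
From mathcomp Require Import all_boot all_order all_algebra.
From mathcomp Require Import all_classical all_reals all_analysis.
Set Implicit Arguments. Unset Strict Implicit. Unset Printing Implicit Defensive.
Import Order.TTheory GRing.Theory Num.Theory.
Import numFieldNormedType.Exports.
Local Open Scope classical_set_scope.
Local Open Scope ring_scope.

Section Defs.
Variable R : realType.

Definition is_metric (T : Type) (d : T -> T -> R) : Prop :=
  (forall x y, 0 <= d x y) /\
  (forall x y, d x y = 0 <-> x = y) /\
  (forall x y, d x y = d y x) /\
  (forall x y z, d x z <= d x y + d y z).

(* F : [0,+oo) -> [0,+oo): nonnegative on [0,+oo) (values elsewhere irrelevant) *)
Definition nonneg_on_nonneg (F : R -> R) : Prop := forall x, 0 <= x -> 0 <= F x.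

Definition metric_preserving (F : R -> R) : Prop :=
  forall (T : Type) (d : T -> T -> R), is_metric d -> is_metric (fun x y => F (d x y)).

Definition d_open (T : Type) (d : T -> T -> R) (A : set T) : Prop :=
  forall x, A x -> exists2 r : R, 0 < r & forall y, d x y < r -> A y.

Definition d_complete (T : Type) (d : T -> T -> R) : Prop :=
  forall u : nat -> T,
    (forall e : R, 0 < e -> exists N, forall n m, (N <= n)%N -> (N <= m)%N -> d (u n) (u m) < e) ->
    exists x, forall e : R, 0 < e -> exists N, forall n, (N <= n)%N -> d (u n) x < e.

Definition d_separable (T : Type) (d : T -> T -> R) : Prop :=
  exists S : set T, countable S /\
    forall x (e : R), 0 < e -> exists s, S s /\ d x s < e.

(* (T, d, m) is an mm-space: d complete separable metric, and the measurable
   sets of T are exactly the Borel sets of the d-topology; m is a Borel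
   probability measure (the probability structure on T). *)
Definition mm_space (dsp : measure_display) (T : measurableType dsp)
    (d : T -> T -> R) : Prop :=
  [/\ is_metric d, d_complete d, d_separable d &
      @measurable dsp T = <<s d_open d >>].

(* U_r(A) = {x | d(x,A) < r}, with d(x,A) = inf_{a in A} d x a *)
Definition nbhd (T : Type) (d : T -> T -> R) (r : R) (A : set T) : set T :=
  [set x | exists2 a, A a & d x a < r].

Local Open Scope ereal_scope.

Definition conc (dsp : measure_display) (T : measurableType dsp)
    (d : T -> T -> R) (m : set T -> \bar R) (r : R) : \bar R :=
  ereal_sup [set 1 - m (nbhd d r A) |
             A in [set A : set T | measurable A /\ (1 / 2)%:E <= m A]].

(* diameter, with diam(empty) = 0 *)
Definition diam (T : Type) (d : T -> T -> R) (A : set T) : \bar R :=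
  ereal_sup ([set 0] `|` [set (d p.1 p.2)%:E | p in A `*` A]).

Definition partial_diam (dsp : measure_display) (T : measurableType dsp)
    (d : T -> T -> R) (m : set T -> \bar R) (a : R) : \bar R :=
  ereal_inf [set diam d A | A in [set A : set T | measurable A /\ a%:E <= m A]].

Definition lipschitz1 (T : Type) (d : T -> T -> R) (f : T -> R) : Prop :=
  forall x y, (`|f x - f y| <= d x y)%R.

Definition obs_diam (dsp : measure_display) (T : measurableType dsp)
    (d : T -> T -> R) (m : set T -> \bar R) (kappa : R) : \bar R :=
  ereal_sup [set partial_diam (fun x y : R => `|x - y|)%R (pushforward m f) (1 - kappa)%R |
             f in [set f : T -> R | lipschitz1 d f]].

End Defs.

(* Main.v *)
Require Import Defs.
From HB Require Import structures.
From mathcomp Require Import all_boot all_order all_algebra.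
From mathcomp Require Import all_classical all_reals all_analysis.
From mathcomp Require Import ring lra.
Import Order.TTheory GRing.Theory Num.Theory.
Import numFieldNormedType.Exports.
Local Open Scope classical_set_scope.
Local Open Scope ring_scope.

Lemma F0 (R : realType) (F : R -> R) : metric_preserving F -> F 0 = 0.
Proof.
move=> mp.
have h : is_metric (fun _ _ : unit => (0:R)).
  by split; [move=> *|split; [move=> [] []|split; [move=> *|move=> *; rewrite addr0]]].
have [_ [H _]] := mp unit _ h.
by apply/(H tt tt).
Qed.

Lemma Ftri (R : realType) (F : R -> R) (a b c : R) : metric_preserving F ->
  0 < a -> 0 < b -> 0 < c -> a <= b + c -> b <= a + c -> c <= a + b ->
  F a <= F b + F c.
Proof.
move=> mp a0 b0 c0 h1 h2 h3.
pose dd (p q : option bool) : R := match p, q with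
  | None, Some true => b | Some true, None => b
  | Some true, Some false => c | Some false, Some true => c
  | None, Some false => a | Some false, None => a
  | _, _ => 0 end.
have hm : is_metric dd.
  split; first by move=> [[]|] [[]|] /=; rewrite ?lexx ?ltW.
  split; first by move=> [[]|] [[]|] /=; split => // /eqP; rewrite ?gt_eqF.
  split; first by move=> [[]|] [[]|].
  move=> [[]|] [[]|] [[]|] /=; lra.
have [_ [_ [_ tr]]] := mp _ _ hm.
exact: (tr None (Some true) (Some false)).
Qed.

Lemma cont0 (R : realType) (F : R -> R) : {within `[0, +oo[, continuous F} ->
  forall e : R, 0 < e -> exists2 r : R, 0 < r & forall u, 0 <= u -> u < r -> `|F u - F 0| < e.
Proof.
move=> /continuous_within_itvcyP [_ /cvgrPdist_lt fa] e e0.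
have := fa e e0.
rewrite /at_right near_withinE /= => -[r /= r0 H].
exists r => // u u0 ur.
have [->|uz] := eqVneq u 0; first by rewrite subrr normr0.
rewrite distrC; apply: H; last by rewrite lt_neqAle eq_sym uz.
by rewrite /= sub0r normrN ger0_norm.
Qed.
Lemma dopen_meas (R : realType) (dsp : measure_display) (T : measurableType dsp)
  (d : T -> T -> R) (A : set T) : mm_space d -> d_open d A -> measurable A.
Proof. by case=> _ _ _ ->; apply: sub_sigma_algebra. Qed.

Lemma nbhd_open (R : realType) (T : Type) (d : T -> T -> R) r A :
  is_metric d -> d_open d (nbhd d r A).
Proof.
move=> [d0 [dE [dC dT]]] x [a Aa xa].
exists (r - d x a); first by rewrite subr_gt0.
move=> y xy; exists a => //.
have := dT y x a; rewrite (dC y x); lra.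
Qed.

Lemma Fopen (R : realType) (F : R -> R) (T : Type) (d : T -> T -> R) A :
  (forall e : R, 0 < e -> exists2 r : R, 0 < r & forall u, 0 <= u -> u < r -> F u < e) ->
  is_metric d -> d_open (fun x y => F (d x y)) A -> d_open d A.
Proof.
move=> Fc [d0 _] oA x Ax.
have [r r0 H] := oA x Ax.
have [s s0 Hs] := Fc r r0.
exists s => // y xy; apply: H; exact: Hs.
Qed.

Lemma cont_meas (R : realType) (dsp : measure_display) (T : measurableType dsp)
  (d : T -> T -> R) (h : T -> R) : mm_space d ->
  (forall x (e : R), 0 < e -> exists2 r : R, 0 < r & forall y, d x y < r -> `|h x - h y| < e) ->
  measurable_fun setT h.
Proof.
move=> mm hc.
apply: (@measurability _ _ _ R setT h (@measurable_realfun.RGenOpens.G R)); first exact: measurable_realfun.RGenOpens.measurableE.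
move=> _ [_ [a [b ->]] <-].

apply: (@dopen_meas _ _ _ d _ mm) => x [_ /=]; rewrite in_itv /= => /andP[ax xb].
have [r r0 H] := hc x (Num.min (h x - a) (b - h x)) ltac:(by rewrite lt_min !subr_gt0 ax xb).
exists r => // y /H; rewrite lt_min => /andP[h1 h2].
split => //=; rewrite in_itv /=.
have n1 : h x - h y <= `|h x - h y| by apply: ler_norm.
have n2 : - (h x - h y) <= `|h x - h y| by rewrite -normrN; apply: ler_norm.
apply/andP; split; lra.
Qed.
Lemma incr_prob (R : realType) (dsp : measure_display) (T : measurableType dsp)
  (m : probability T R) (E : nat -> set T) (r : R) :
  (forall n, measurable (E n)) -> (forall n, E n `<=` E n.+1) ->
  (forall x, exists n, E n x) -> r < 1 -> exists n, (r%:E < m (E n))%E.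
Proof.
move=> mE incE cov r1.
have U : \bigcup_n E n = setT.
  by apply/seteqP; split => // x _; have [n ?] := cov x; exists n.
have nd : nondecreasing_seq E.
  by apply/nondecreasing_seqP => n; apply/subsetPset.
have c1 := nondecreasing_cvg_mu (mu:=m) mE (ltac:(by rewrite U)) nd.
have ndm : nondecreasing_seq (m \o E).
  move=> a b ab; apply: le_measure; rewrite ?inE //; exact/subsetPset/nd.
have c2 := ereal_nondecreasing_cvgn ndm.
have e : m (\bigcup_n E n) = ereal_sup (range (m \o E)).
  by rewrite -(cvg_lim _ c1) // -(cvg_lim _ c2).
move: e; rewrite U probability_setT => e.
have : (r%:E < ereal_sup (range (m \o E)))%E by rewrite -e lte_fin.
by move=> /ereal_sup_gt [_ [n _ <-] h]; exists n.
Qed.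
Definition dset (R : realType) (T : Type) (d : T -> T -> R) (A : set T) (x : T) : R :=
  inf [set d x a | a in A].
Arguments dset {R T}.

Section dsetS.
Context (R : realType) (T : Type) (d : T -> T -> R) (A : set T).
Hypotheses (md : is_metric d) (A0 : A !=set0).

Lemma dset_lb x a : A a -> dset d A x <= d x a.
Proof.
move=> Aa; apply: ge_inf; last by exists a.
exists 0 => _ [b _ <-]; by case: md.
Qed.

Lemma dset_ge0 x : 0 <= dset d A x.
Proof.
case: A0 => a Aa; apply: lb_le_inf; first by exists (d x a), a.
move=> _ [b _ <-]; by case: md.
Qed.

Lemma dset_in a : A a -> dset d A a = 0.
Proof.
move=> Aa; apply/eqP; rewrite eq_le dset_ge0 andbT.
have := dset_lb a a Aa; case: md => _ [/(_ a a) [_ ->] //].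
Qed.

Lemma dset_lt x t : dset d A x < t -> exists2 a, A a & d x a < t.
Proof.
case: A0 => a0 Aa0 /inf_lt [].
  by exists (d x a0), a0.
by move=> _ [a Aa <-] h; exists a.
Qed.

Lemma dset_lip : lipschitz1 d (dset d A).
Proof.
case: md => [d0 [dE [dC dT]]].
have H x y : dset d A x - d x y <= dset d A y.
  case: A0 => a0 Aa0; apply: lb_le_inf; first by exists (d y a0), a0.
  move=> _ [a Aa <-]; have := dset_lb x a Aa; have := dT x y a; lra.
move=> x y; rewrite ler_norml; apply/andP; split.
  by have := H y x; rewrite (dC y x); lra.
by have := H x y; lra.
Qed.

End dsetS.

Arguments dset_lb {R T d A}. Arguments dset_ge0 {R T d A}. Arguments dset_in {R T d A}.
Arguments dset_lt {R T d A}. Arguments dset_lip {R T d A}.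
Arguments cont_meas {R dsp T d h}. Arguments dopen_meas {R dsp T d A}.
Arguments nbhd_open {R T d}. Arguments incr_prob {R dsp T} m {E r}.
Arguments Ftri {R F a b c}. Arguments F0 {R F}. Arguments cont0 {R F}.
Arguments Fopen {R F T d A}.

Lemma mfin (R : realType) (dsp : measure_display) (T : measurableType dsp)
  (m : probability T R) (A : set T) : measurable A ->
  m A = (fine (m A))%:E /\ 0 <= fine (m A) <= 1.
Proof.
move=> mA.
have h0 : (0 <= m A)%E by [].
have h1 : (m A <= 1)%E by apply: probability_le1.
have fA : m A \is a fin_num by rewrite ge0_fin_numE // (le_lt_trans h1) // ltry.
split; first by rewrite fineK.
by rewrite fine_ge0 //= -lee_fin fineK.
Qed.

Lemma mpre (R : realType) (dsp : measure_display) (T : measurableType dsp) (h : T -> R) (B : set R) :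
  measurable_fun setT h -> measurable B -> measurable (h @^-1` B).
Proof. by move=> mh mB; rewrite -[_ @^-1` _]setTI; exact: mh. Qed.

Lemma diam_le (R : realType) (I : set R) (L : R) : 0 <= L ->
  (forall p q, I p -> I q -> `|p - q| <= L) ->
  (diam (fun x y : R => `|x - y|)%R I <= L%:E)%E.
Proof.
move=> L0 H; apply: ge_ereal_sup => _ [-> //|[[p q] [/= Ip Iq] <-]].
by rewrite lee_fin; apply: H.
Qed.

Lemma diam_ge (R : realType) (I : set R) p q : I p -> I q ->
  ((`|p - q|)%:E <= diam (fun x y : R => `|x - y|)%R I)%E.
Proof. by move=> Ip Iq; apply: ereal_sup_ubound; right; exists (p, q). Qed.

Lemma PD_le (R : realType) (dsp : measure_display) (T : measurableType dsp)
  (m : probability T R) (g : T -> R) (a : R) (I : set R) :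
  measurable I -> (a%:E <= m (g @^-1` I))%E ->
  (partial_diam (fun x y : R => `|x - y|)%R (pushforward m g) a <= diam (fun x y : R => `|x - y|)%R I)%E.
Proof. by move=> mI h; apply: ereal_inf_lbound; exists I. Qed.

Lemma lip_cont (R : realType) (T : Type) (d : T -> T -> R) (h : T -> R) :
  lipschitz1 d h ->
  forall x (e : R), 0 < e -> exists2 r : R, 0 < r & forall y, d x y < r -> `|h x - h y| < e.
Proof. by move=> hl x e e0; exists e => // y xy; apply: le_lt_trans (hl x y) xy. Qed.

Lemma lipF_cont (R : realType) (F : R -> R) (T : Type) (d : T -> T -> R) (h : T -> R) :
  (forall e : R, 0 < e -> exists2 r : R, 0 < r & forall u, 0 <= u -> u < r -> F u < e) ->
  is_metric d -> lipschitz1 (fun x y => F (d x y)) h ->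
  forall x (e : R), 0 < e -> exists2 r : R, 0 < r & forall y, d x y < r -> `|h x - h y| < e.
Proof.
move=> Fc [d0 _] hl x e e0; have [r r0 H] := Fc e e0.
by exists r => // y xy; apply: le_lt_trans (hl x y) _; apply: H.
Qed.

Arguments lip_cont {R T d h}. Arguments lipF_cont {R F T d h}.
Arguments mfin {R dsp T} m {A}. Arguments mpre {R dsp T h B}.
Arguments diam_le {R I L}. Arguments diam_ge {R I p q}. Arguments PD_le {R dsp T m g a I}.

Lemma PD_le_OD (R : realType) (dsp : measure_display) (T : measurableType dsp)
  (d : T -> T -> R) (m : probability T R) (kappa : R) (f : T -> R) :
  lipschitz1 d f ->
  (partial_diam (fun x y : R => `|x - y|)%R (pushforward m f) (1 - kappa) <= obs_diam d m kappa)%E.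
Proof. by move=> fl; apply: ereal_sup_ubound; exists f. Qed.
Arguments PD_le_OD {R dsp T d m kappa f}.

Lemma claim (R : realType) (dsp : measure_display) (T : measurableType dsp)
  (d : T -> T -> R) (m : probability T R) (kappa D delta : R) (A : set T) :
  mm_space d -> 0 < kappa -> (obs_diam d m kappa <= D%:E)%E -> 0 < delta ->
  measurable A -> (kappa%:E < m A)%E ->
  ((1 - kappa)%:E <= m (nbhd d (D + delta) A))%E.
Proof.
move=> mm k0 hD dl0 mA kA.
have md : is_metric d by case: mm.
have A0 : A !=set0.
  apply/set0P/negP => /eqP A0; move: kA; rewrite A0 measure0 lte_fin; lra.
pose f := dset d A.
have fl : lipschitz1 d f := dset_lip md A0.
have mf : measurable_fun setT f := cont_meas mm (lip_cont fl).
have : (partial_diam (fun x y : R => `|x - y|)%R (pushforward m f) (1 - kappa) < (D + delta / 2)%:E)%E.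
  apply: le_lt_trans (PD_le_OD fl) _.
  apply: le_lt_trans hD _; rewrite lte_fin; lra.
move=> /ereal_inf_lt [_ [I [mI hI] <-] dI].
rewrite /pushforward in hI.
have mfI : measurable (f @^-1` I) := mpre mf mI.
have [a0 Aa0 Ia0] : exists2 a, A a & I (f a).
  apply: contrapT => hn.
  have sub : A `<=` ~` (f @^-1` I) by move=> a Aa Ia; apply: hn; exists a.
  have : (m A <= m (~` (f @^-1` I)))%E.
    by apply: le_measure => //; rewrite inE //; exact: measurableC.
  rewrite (@probability_setC _ _ _ m _ mfI).
  have [e1 _] := mfin m mfI; have [e2 _] := mfin m mA.
  move: kA hI; rewrite e1 e2 -[(1)%E]/(1%R%:E) -EFinB !lee_fin !lte_fin; lra.
have fa0 : f a0 = 0 := dset_in md A0 a0 Aa0.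
have sub : f @^-1` I `<=` nbhd d (D + delta) A.
  move=> x Ix; apply: (dset_lt A0).
  have := le_lt_trans (diam_ge Ix Ia0) dI; rewrite lte_fin fa0 subr0 => h.
  have := ler_norm (f x); lra.
apply: le_trans hI _; apply: le_measure => //; rewrite inE //.
exact: (dopen_meas mm (nbhd_open _ _ md)).
Qed.
Arguments claim {R dsp T d m kappa D delta A}.

Lemma part2 (R : realType) (F : R -> R) (dsp : measure_display) (T : measurableType dsp)
  (d : T -> T -> R) (m : probability T R) (kappa D : R) (g : T -> R) :
  nonneg_on_nonneg F -> metric_preserving F -> {within `[0, +oo[, continuous F} ->
  mm_space d -> 0 < kappa -> kappa < 1 / 2 -> 0 <= D ->
  (obs_diam d m kappa <= D%:E)%E ->
  lipschitz1 (fun x y => F (d x y)) g ->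
  (partial_diam (fun x y : R => `|x - y|)%R (pushforward m g) (1 - 2 * kappa) <= (4 * F D)%:E)%E.
Proof.
move=> Fnn mp Fc mm k0 k12 D0 hD gl.
have md : is_metric d by case: mm.
have F00 := F0 mp.
have Fc0 : forall e : R, 0 < e -> exists2 r : R, 0 < r & forall u, 0 <= u -> u < r -> F u < e.
  move=> e e0; have [r r0 H] := cont0 Fc e e0; exists r => // u u0 ur.
  by have := H u u0 ur; rewrite F00 subr0 => h; exact: le_lt_trans (ler_norm _) h.
have mg : measurable_fun setT g := cont_meas mm (lipF_cont Fc0 md gl).
apply/lee_addgt0Pr => e4 e40.
pose e := e4 / 4.
have e0 : 0 < e by rewrite /e divr_gt0.
have e4E : e4 = 4 * e by rewrite /e; field.
have [dl dl0 Hdl] := Fc0 e e0.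
have FD0 : 0 <= F D := Fnn D D0.
have Fb : forall t, 0 <= t -> t < D + dl -> F t <= 2 * F D + e.
  move=> t t0 tD.
  have [->|tn0] := eqVneq t 0; first by rewrite F00; lra.
  have tp : 0 < t by rewrite lt_neqAle eq_sym tn0.
  have [tD'|Dt] := leP t D.
    have Dp : 0 < D by apply: lt_le_trans tD'.
    have := Ftri mp tp Dp Dp ltac:(lra) ltac:(lra) ltac:(lra); lra.
  have [D00|Dn0] := eqVneq D 0.
    have := Hdl t t0 ltac:(lra); rewrite D00 F00; lra.
  have Dp : 0 < D by rewrite lt_neqAle eq_sym Dn0.
  have tDp : 0 < t - D by rewrite subr_gt0.
  have := Ftri mp tp Dp tDp ltac:(lra) ltac:(lra) ltac:(lra).
  have := Hdl (t - D) ltac:(lra) ltac:(lra); lra.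
have mc t : measurable (g @^-1` `]-oo, t]) := mpre mg (measurable_itv _).
pose fm t := fine (m (g @^-1` `]-oo, t])).
have mono t t' : t <= t' -> fm t <= fm t'.
  move=> tt'; have [e1 _] := mfin m (mc t); have [e2 _] := mfin m (mc t').
  rewrite -lee_fin -e1 -e2; apply: le_measure; rewrite ?inE //.
  by move=> x /=; rewrite !in_itv /= => h; apply: le_trans h tt'.
have bnd x : exists n : nat, `|g x| < n%:R.
  by exists (Num.bound `|g x|); apply: archi_boundP.
have inc1 : forall n : nat, g @^-1` `]-oo, n%:R] `<=` g @^-1` `]-oo, n.+1%:R].
  move=> n x /=; rewrite !in_itv /= => h; apply: le_trans h _; by rewrite ler_nat.
have cov1 : forall x, exists n : nat, (g @^-1` `]-oo, n%:R]) x.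
  move=> x; have [n hn] := bnd x; exists n; rewrite /= in_itv /=.
  have := ler_norm (g x); lra.
have [n1 hn1] := incr_prob m (E := fun n : nat => g @^-1` `]-oo, n%:R]) (r := kappa)
  (fun n => mc _) inc1 cov1 ltac:(lra).
have inc0 : forall n : nat, ~` (g @^-1` `]-oo, - n%:R]) `<=` ~` (g @^-1` `]-oo, - n.+1%:R]).
  move=> n x /=; rewrite !in_itv /= => h1 h2; apply: h1; apply: le_trans h2 _.
  by rewrite lerN2 ler_nat.
have cov0 : forall x, exists n : nat, (~` (g @^-1` `]-oo, - n%:R])) x.
  move=> x; have [n hn] := bnd x; exists n; rewrite /= in_itv /= => h.
  have := ler_norm (- g x); rewrite normrN; lra.
have [n0 hn0] := incr_prob m (E := fun n : nat => ~` (g @^-1` `]-oo, - n%:R])) (r := 1 - kappa)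
  (fun n => measurableC (mc _)) inc0 cov0 ltac:(lra).
have fmE t : m (g @^-1` `]-oo, t]) = (fm t)%:E by have [] := mfin m (mc t).
have fm01 t : 0 <= fm t <= 1 by have [] := mfin m (mc t).
have h1 : kappa < fm n1%:R by rewrite -lte_fin -fmE.
have h0 : fm (- n0%:R) < kappa.
  move: hn0; rewrite (@probability_setC _ _ _ m _ (mc _)) fmE.
  rewrite -[(1)%E]/(1%R%:E) -EFinB lte_fin; lra.
pose S := [set t : R | kappa < fm t].
have S0 : S !=set0 by exists n1%:R.
have Slb : has_lbound S.
  exists (- n0%:R) => t St; rewrite leNgt; apply/negP => tn.
  have := mono _ _ (ltW tn); rewrite /S /= in St.
  lra.
pose M := inf S.
have [t St tM] := inf_lt S0 (ltr_pwDr e0 (lexx M) : M < M + e).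
have hA : kappa < fm (M + e) by have := mono _ _ (ltW tM); rewrite /S /= in St; lra.
have hB : fm (M - e) <= kappa.
  rewrite leNgt; apply/negP => h.
  have := ge_inf Slb (h : S (M - e)); rewrite -/M; lra.
pose A1 := g @^-1` `]-oo, M + e].
pose B1 := ~` (g @^-1` `]-oo, M - e]).
have mB1 : measurable B1 := measurableC (mc _).
have kA1 : (kappa%:E < m A1)%E by rewrite fmE lte_fin.
have kB1 : (kappa%:E < m B1)%E.
  rewrite (@probability_setC _ _ _ m _ (mc _)) fmE -[(1)%E]/(1%R%:E) -EFinB lte_fin; lra.
pose U := nbhd d (D + dl) A1.
pose V := nbhd d (D + dl) B1.
have mU : measurable U := dopen_meas mm (nbhd_open _ _ md).
have mV : measurable V := dopen_meas mm (nbhd_open _ _ md).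
have hU := claim mm k0 hD dl0 (mc _) kA1.
have hV := claim mm k0 hD dl0 mB1 kB1.
rewrite -/U in hU; rewrite -/V in hV.
have hUV : ((1 - 2 * kappa)%:E <= m (U `&` V))%E.
  have : (m (~` U `|` ~` V) <= m (~` U) + m (~` V))%E.
    by apply: measureU2; apply: measurableC.
  rewrite -setCI !(@probability_setC _ _ _ m) //; last exact: measurableI.
  have [eU _] := mfin m mU; have [eV _] := mfin m mV.
  have [eUV _] := mfin m (measurableI _ _ mU mV).
  move: hU hV; rewrite eU eV eUV -[(1)%E]/(1%R%:E) -!EFinB -EFinD !lee_fin; lra.
pose L := 2 * F D + e.
have L0 : 0 <= L by rewrite /L; lra.
pose I := `[M - e - L, M + e + L]%classic.
have sub : U `&` V `<=` g @^-1` I.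
  move=> x [[a Aa xa] [b Bb xb]].
  have ha : g a <= M + e by move: Aa; rewrite /A1 /= in_itv.
  have hb : M - e < g b.
    by move: Bb; rewrite /B1 /= in_itv /= => /negP; rewrite -ltNge.
  have [d0 _] := md.
  have la := Fb _ (d0 x a) xa; have lb := Fb _ (d0 x b) xb.
  have ga := gl x a; have gb := gl x b.
  move: ga gb; rewrite !ler_norml => /andP[ga1 ga2] /andP[gb1 gb2].
  by rewrite /I /= in_itv /=; apply/andP; split; rewrite /L; lra.
have mI : measurable I by exact: measurable_itv.
have hI : ((1 - 2 * kappa)%:E <= m (g @^-1` I))%E.
  apply: le_trans hUV _; apply: le_measure => //; rewrite inE //.
    exact: measurableI.
  exact: mpre.
apply: le_trans (PD_le mI hI) _.
rewrite -EFinD; apply: diam_le; first by rewrite /L; lra.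
move=> p q; rewrite /I /= !in_itv /= => /andP[p1 p2] /andP[q1 q2].
rewrite ler_norml; apply/andP; split; rewrite /L in p1 p2 q1 q2; lra.
Qed.
Arguments part2 {R F dsp T d m kappa D g}.

Lemma OD_fin (R : realType) (dsp : measure_display) (T : measurableType dsp)
  (d : T -> T -> R) (m : probability T R) (kappa : R) :
  mm_space d -> 0 < kappa -> exists D, 0 <= D /\ obs_diam d m kappa = D%:E.
Proof.
move=> mm k0.
have md : is_metric d by case: mm.
have [d0 [dE [dC dT]]] := md.
have [x0 _] : [set: T] !=set0.
  apply/set0P/negP => /eqP h; have := @probability_setT _ _ _ m.
  by rewrite h measure0 => /eqP; rewrite eq_sym onee_eq0.
have mE n : measurable (nbhd d n%:R [set x0]) := dopen_meas mm (nbhd_open _ _ md).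
have inc : forall n : nat, nbhd d n%:R [set x0] `<=` nbhd d n.+1%:R [set x0].
  move=> n x [a ax xa]; exists a => //; apply: lt_le_trans xa _; by rewrite ler_nat.
have cov : forall x, exists n : nat, nbhd d n%:R [set x0] x.
  move=> x; exists (Num.bound (d x x0)); exists x0 => //; exact: archi_boundP.
have [n hn] := incr_prob m (E := fun n : nat => nbhd d n%:R [set x0]) (r := 1 - kappa)
  mE inc cov ltac:(lra).
have ub : (obs_diam d m kappa <= (2 * n%:R)%:E)%E.
  apply: ge_ereal_sup => _ [f fl <-].
  have mf : measurable_fun setT f := cont_meas mm (lip_cont fl).
  pose I := `[f x0 - n%:R, f x0 + n%:R]%classic.
  have mI : measurable I by exact: measurable_itv.
  have hI : ((1 - kappa)%:E <= m (f @^-1` I))%E.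
    apply: le_trans (ltW hn) _; apply: le_measure => //; rewrite ?inE //.
      exact: mpre.
    move=> x [a -> xa]; have := fl x x0; rewrite ler_norml => /andP[h1 h2].
    by rewrite /I /= in_itv /=; apply/andP; split; lra.
  apply: le_trans (PD_le mI hI) _; apply: diam_le => [|p q].
    by rewrite mulr_ge0.
  rewrite /I /= !in_itv /= => /andP[p1 p2] /andP[q1 q2].
  by rewrite ler_norml; apply/andP; split; lra.
have lb : (0 <= obs_diam d m kappa)%E.
  have l0 : lipschitz1 d (fun _ : T => 0 : R) by move=> x y; rewrite subrr normr0; exact: d0.
  apply: le_trans (PD_le_OD (m := m) (kappa := kappa) l0).
  apply: le_ereal_inf_tmp => _ [A _ <-]; apply: ereal_sup_ubound; by left.
have fn : obs_diam d m kappa \is a fin_num.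
  by rewrite ge0_fin_numE // (le_lt_trans ub) // ltry.
by exists (fine (obs_diam d m kappa)); split; [exact: fine_ge0|rewrite fineK].
Qed.
Arguments OD_fin {R dsp T d} m {kappa}.

Theorem mainTheorem6 (R : realType) (F : R -> R)
    (dsp : measure_display) (T : measurableType dsp)
    (d : T -> T -> R) (m : probability T R) :
  nonneg_on_nonneg F ->
  metric_preserving F ->
  {within `[0, +oo[, continuous F} ->
  mm_space d ->
  (forall s : R, 0 < s ->
     (ereal_sup [set conc (fun x y => F (d x y)) m (2 * F s + e)%R | e in [set e : R | (0 < e)%R]]
      <= conc d m s)%E) /\
  (forall kappa : R, 0 < kappa ->
     (obs_diam (fun x y => F (d x y)) m (2 * kappa)%R
      <= (4 * F (fine (obs_diam d m kappa)))%:E)%E).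
Proof.
move=> Fnn mp Fc mm.
have md : is_metric d by case: mm.
have mdF : is_metric (fun x y => F (d x y)) := mp _ _ md.
have F00 := F0 mp.
have Fc0 : forall e : R, 0 < e -> exists2 r : R, 0 < r & forall u, 0 <= u -> u < r -> F u < e.
  move=> e e0; have [r r0 H] := cont0 Fc e e0; exists r => // u u0 ur.
  by have := H u u0 ur; rewrite F00 subr0 => h; exact: le_lt_trans (ler_norm _) h.
split.
  move=> s s0; apply: ge_ereal_sup => _ [e /= e0 <-].
  apply: ge_ereal_sup => _ [A [mA hA] <-].
  apply: (@le_trans _ _ (1 - m (nbhd d s A))%E); last first.
    by apply: ereal_sup_ubound; exists A.
  apply: leeB => //; apply: le_measure; rewrite ?inE //.
  - exact: (dopen_meas mm (nbhd_open _ _ md)).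
  - exact: (dopen_meas mm (Fopen Fc0 md (nbhd_open _ _ mdF))).
  move=> x [a Aa xa]; exists a => //.
  have Fs0 : 0 <= F s by apply: Fnn; apply: ltW.
  have [d0 _] := md.
  have [h0|hn0] := eqVneq (d x a) 0; first by rewrite h0 F00; lra.
  have hp : 0 < d x a by rewrite lt_neqAle eq_sym hn0 d0.
  have := Ftri mp hp s0 s0 ltac:(lra) ltac:(lra) ltac:(lra); lra.
move=> kappa k0.
have [D [D0 eD]] := OD_fin m mm k0.
rewrite eD /=.
apply: ge_ereal_sup => _ [g gl <-].
have [hk|hk] := ltP kappa (1 / 2).
  by apply: (part2 Fnn mp Fc mm k0 hk D0 _ gl); rewrite eD.
have FD0 : 0 <= F D := Fnn D D0.
have hI : ((1 - 2 * kappa)%:E <= m (g @^-1` set0))%E.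
  by rewrite preimage_set0 measure0 lee_fin; lra.
apply: le_trans (PD_le measurable0 hI) _.
apply: le_trans (diam_le (L := 0) (lexx 0) _) _; first by move=> p q [].
by rewrite lee_fin; lra.
Qed.
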